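(* Let $b>2$ and $1<n<b$ be integers, and let $p$ be an $(n,b)$-palintiple. Then $p$ is shifted-symmetric if and only if $\gcd(b-n,n^2-1)\ge n+1$.
   Context: Let $b>2$ be an integer base and write $(d_k,d_{k-1},\ldots,d_0)_b=\sum_{j=0}^k d_j b^j$ with $0\le d_j<b$. A natural number $p=(d_k,\ldots,d_0)_b$ with $d_k\neq 0$ and $d_0\neq 0$ that is not a base-$b$ palindrome is an $(n,b)$-palintiple if $(d_k,\ldots,d_0)_b=n\,(d_0,d_1,\ldots,d_k)_b$ for an integer $n$ with $1<n<b$. Its carries $c_0,\ldots,c_{k+1}$ are the carries arising in the base-$b$ multiplication of $(d_0,\ldots,d_k)_b$ by $n$: $c_0=0$ and $n d_{k-j}+c_j=d_j+b\,c_{j+1}$ for $0\le j\le k$ (so $c_{k+1}=0$). The palintiple is shifted-symmetric if $c_j=c_{k-j+1}$ for all $0\le j\le k$. *)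

(* Defs.v *)
From mathcomp Require Import all_boot.
Set Implicit Arguments. Unset Strict Implicit. Unset Printing Implicit Defensive.

Definition digit (b p j : nat) : nat := (p %/ b ^ j) %% b.

(* index k of the leading digit of p (p has k+1 base-b digits, for p > 0). *)
Definition lead_idx (b p : nat) : nat := trunc_log b p.

Definition reversal (b p : nat) : nat :=
  \sum_(j < (lead_idx b p).+1) digit b p (lead_idx b p - j) * b ^ j.

Definition is_palindrome (b p : nat) : Prop :=
  forall j, j <= lead_idx b p -> digit b p j = digit b p (lead_idx b p - j).

Definition palintiple (n b p : nat) : Prop :=
  [/\ 0 < p, digit b p (lead_idx b p) != 0, digit b p 0 != 0,
      ~ is_palindrome b p & (1 < n < b) /\ p = n * reversal b p].

(* Carries c_j of the base-b multiplication of (d_0,...,d_k)_b by n: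
   c_0 = 0 and n d_{k-j} + c_j = d_j + b c_{j+1}, i.e.
   c_{j+1} = (n d_{k-j} + c_j) div b. *)
Fixpoint carry (n b p j : nat) : nat :=
  match j with
  | 0 => 0
  | j'.+1 => (n * digit b p (lead_idx b p - j') + carry n b p j') %/ b
  end.

Definition shifted_symmetric (n b p : nat) : Prop :=
  forall j, j <= lead_idx b p ->
    carry n b p j = carry n b p (lead_idx b p - j + 1).

(* Main.v *)
Require Import Defs.
From mathcomp Require Import all_boot.
From mathcomp Require Import zify ring.

Definition Rf (b p k j : nat) := \sum_(i < j) digit b p (k - i) * b ^ i.

Lemma RfS b p k j : Rf b p k j.+1 = Rf b p k j + digit b p (k - j) * b ^ j.
Proof. by rewrite /Rf big_ord_recr. Qed.

Lemma digit_lt b p j : 0 < b -> digit b p j < b.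
Proof. by move=> hb; rewrite /digit ltn_pmod. Qed.

Lemma carry_lt b n p j : 0 < b -> 0 < n -> carry n b p j < n.
Proof.
move=> hb hn; elim: j => [|j IH] //=.
rewrite ltn_divLR //.
have := digit_lt b p (lead_idx b p - j) hb. nia.
Qed.

Lemma Rf_split b p k j m : j <= m -> exists H, Rf b p k m = Rf b p k j + b ^ j * H.
Proof.
elim: m => [|m IH].
  by rewrite leqn0 => /eqP ->; exists 0; rewrite muln0 addn0.
rewrite leq_eqVlt => /orP [/eqP ->|hj]; first by exists 0; rewrite muln0 addn0.
have [H eH] := IH hj.
exists (H + digit b p (k - m) * b ^ (m - j)).
rewrite RfS eH mulnDr -addnA; congr (_ + (_ + _)).
by rewrite mulnCA -expnD subnKC.
Qed.

Lemma inv b n p : 1 < b -> p = n * reversal b p ->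
  forall j, j <= (lead_idx b p).+1 ->
  n * Rf b p (lead_idx b p) j = p %% b ^ j + carry n b p j * b ^ j.
Proof.
move=> hb hp; set k := lead_idx b p.
elim => [|j IH] hj; first by rewrite /Rf big_ord0 expn0 modn1 /= muln0.
have IH' := IH (ltnW hj).
set s := n * digit b p (k - j) + carry n b p j.
have hc : carry n b p j.+1 = s %/ b by [].
have hs := divn_eq s b.
have hm : s %% b < b by rewrite ltn_pmod // ltnW.
have hP : p %% b ^ j < b ^ j by rewrite ltn_pmod // expn_gt0 ltnW.
have eR : n * Rf b p k j.+1 = (p %% b ^ j + s %% b * b ^ j) + carry n b p j.+1 * b ^ j.+1.
  rewrite RfS mulnDr IH' hc expnS.
  have : s * b ^ j = (s %/ b * b + s %% b) * b^j by rewrite -hs.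
  rewrite /s. nia.
have hT : p %% b ^ j + s %% b * b ^ j < b ^ j.+1 by rewrite expnS; nia.
have [H eH] := Rf_split b p k _ _ hj.
have ep : p %% b ^ j.+1 = p %% b ^ j + s %% b * b ^ j.
  rewrite {1}hp /reversal -/k -/(Rf b p k k.+1) eH mulnDr eR.
  have -> : p %% b ^ j + s %% b * b ^ j + carry n b p j.+1 * b ^ j.+1 +
     n * (b ^ j.+1 * H) = (carry n b p j.+1 + n * H) * b ^ j.+1 + (p %% b ^ j + s %% b * b ^ j) by ring.
  by rewrite modnMDl modn_small.
by rewrite eR ep.
Qed.

Lemma modpow b p j : 1 < b -> p %% b ^ j.+1 = p %% b ^ j + digit b p j * b ^ j.
Proof.
move=> hb.
have hP : p %% b ^ j < b ^ j by rewrite ltn_pmod // expn_gt0 ltnW.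
have hd := digit_lt b p j (ltnW hb).
have e : p = (p %/ b ^ j.+1) * b ^ j.+1 + (digit b p j * b ^ j + p %% b ^ j).
  rewrite {1}(divn_eq p (b ^ j)) {1}(divn_eq (p %/ b ^ j) b) expnSr divnMA /digit.
  ring.
rewrite {1}e modnMDl modn_small; first by rewrite addnC.
rewrite expnS; nia.
Qed.

Lemma Eq b n p j : 1 < b -> p = n * reversal b p -> j <= lead_idx b p ->
  n * digit b p (lead_idx b p - j) + carry n b p j
  = digit b p j + b * carry n b p j.+1.
Proof.
move=> hb hp hj.
have h1 := inv b n p hb hp j (leqW hj).
have h2 := inv b n p hb hp j.+1 hj.
rewrite RfS modpow // mulnDr h1 expnS in h2.
have hpos : 0 < b ^ j by rewrite expn_gt0 ltnW.
apply/eqP; rewrite -(eqn_pmul2r hpos); apply/eqP.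
nia.
Qed.

Lemma ctop b n p : 1 < b -> 0 < p -> p = n * reversal b p ->
  carry n b p (lead_idx b p).+1 = 0.
Proof.
move=> hb hp0 hp.
have h := inv b n p hb hp (lead_idx b p).+1 (leqnn _).
have hl : p < b ^ (lead_idx b p).+1 by exact: trunc_log_ltn.
rewrite modn_small // in h.
have : n * Rf b p (lead_idx b p) (lead_idx b p).+1 = p by rewrite [in RHS]hp.
rewrite h => e.
have hpos : 0 < b ^ (lead_idx b p).+1 by rewrite expn_gt0 ltnW.
nia.
Qed.
Lemma key n b g u v x d a c c' : b = n + u*g -> n*n = 1 + v*g ->
  n*x + c = d + b*c' -> n*d + a = x + b*c -> a < g -> c' < g -> a = c'.
Proof.
move=> hb hn hA hB ha hc.
have h3 : n*(n*x + c) = n*(d + b*c') by rewrite hA.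
have h4 : n*n*x = x + v*g*x by rewrite hn; ring.
have h5 : n*n*c' = c' + v*g*c' by rewrite hn; ring.
subst b.
have e : (v*x) * g + a = (v*c' + n*u*c' + u*c) * g + c'.
  rewrite !mulnDr !mulnDl in h3 h5 *. nia.
have := congr1 (modn^~ g) e.
by rewrite /= !modnMDl !modn_small.
Qed.

Theorem theorem1 (b n p : nat) :
  2 < b -> 1 < n < b -> palintiple n b p ->
  (shifted_symmetric n b p <-> n + 1 <= gcdn (b - n) (n ^ 2 - 1)).
Proof.
move=> hb /andP[hn1 hnb] [hp0 _ hd0 hnp [_ hp]].
have hb1 : 1 < b by apply: ltnW.
have hk1 : 0 < lead_idx b p.
  case E: (lead_idx b p) => [|k] //; exfalso; apply: hnp.
  by move=> j; rewrite E leqn0 => /eqP ->.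
have hcl j : carry n b p j < n by apply: carry_lt; lia.
have htop := ctop b n p hb1 hp0 hp.
have E0 := Eq b n p 0 hb1 hp (leq0n _).
have Ek := Eq b n p (lead_idx b p) hb1 hp (leqnn _).
rewrite subn0 /= addn0 in E0.
rewrite subnn htop muln0 addn0 in Ek.
have hd0p : 0 < digit b p 0 by rewrite lt0n.
split.
- move=> hss.
  have h1 := hss 1 hk1.
  rewrite subnK // in h1.
  rewrite -h1 in Ek.
  set c1 := carry n b p 1 in E0 Ek h1.
  set d0 := digit b p 0 in E0 Ek hd0p.
  set g := gcdn (b - n) (n ^ 2 - 1).
  have sqE : n ^ 2 = n * n by rewrite expnS expn1.
  have eq : (n ^ 2 - 1) * d0 = (b - n) * c1.
    have e2 : n * n * d0 + n * c1 = d0 + b * c1.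
      by rewrite -E0 -Ek; ring.
    have hnb' : n * c1 <= b * c1 by rewrite leq_mul2r ltnW ?orbT.
    have hn2 : 1 <= n * n by rewrite muln_gt0 ltnW.
    rewrite !mulnBl mul1n sqE. lia.
  have hn2 : 0 < n ^ 2 - 1 by rewrite subn_gt0 (ltn_exp2l 0 2).
  have hc1 : 0 < c1.
    rewrite lt0n; apply/negP => /eqP h0.
    move: eq; rewrite h0 muln0 => /eqP; rewrite muln_eq0 => /orP [] /eqP hh.
      by rewrite hh in hn2.
    by rewrite hh in hd0p.
  have hdv : n ^ 2 - 1 %| g * c1.
    rewrite /g muln_gcdl dvdn_gcd -eq; apply/andP; split; first exact: dvdn_mulr.
    exact: dvdn_mulr.
  have hg : 0 < g by rewrite gcdn_gt0 hn2 orbT.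
  have hle : n ^ 2 - 1 <= g * c1 by apply: dvdn_leq => //; rewrite muln_gt0 hg hc1.
  have hc : c1 <= n.-1 by rewrite -ltnS prednK ?(hcl 1) // ltnW.
  have : (n.+1) * n.-1 <= g * n.-1.
    apply: (leq_trans _ (leq_trans hle _)); last by rewrite leq_mul2l hc orbT.
    have aux : forall m, 0 < m -> m.+1 * m.-1 <= m ^ 2 - 1.
      by case => // m _; rewrite expnS expn1 /=; lia.
    by apply: aux; apply: ltnW.
  rewrite leq_pmul2r ?addn1 //.
  by rewrite -subn1 subn_gt0.
- move=> hg.
  set g := gcdn (b - n) (n ^ 2 - 1) in hg.
  have [u hu] : exists u, b - n = u * g by apply/dvdnP; exact: dvdn_gcdl.
  have [v hv] : exists v, n ^ 2 - 1 = v * g by apply/dvdnP; exact: dvdn_gcdr.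
  have hbu : b = n + u * g by lia.
  have hnv : n * n = 1 + v * g by rewrite -hv; nia.
  elim => [|j IH] hj.
    by rewrite /= subn0 addn1 htop.
  have IH' := IH (ltnW hj).
  have Ej := Eq b n p j hb1 hp (ltnW hj).
  have Ekj := Eq b n p (lead_idx b p - j) hb1 hp (leq_subr _ _).
  rewrite subKn ?(ltnW hj) // -addn1 -IH' in Ekj.
  have -> : lead_idx b p - j.+1 + 1 = lead_idx b p - j by lia.
  apply/esym.
  apply: (key n b g u v (digit b p (lead_idx b p - j)) (digit b p j) _ (carry n b p j)) => //.
  + have := hcl (lead_idx b p - j); lia.
  + have := hcl j.+1; lia.
Qed.
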